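(* Let $1<p<q<\infty$. There exist functions $\phi,\psi\in L^p_{loc}(\mathbb{R})$ such that $S_p(\phi,\psi)<\infty$ and $T_p(\phi,\psi)<\infty$, but $S_q(\phi,\psi)=\infty$.
   Context: For $0<r<\infty$, with $\langle g\rangle_I=\frac1{|I|}\int_Ig$ and suprema over all intervals $I\subset\mathbb{R}$: $S_r(b_1,b_2)=\sup_I\big(\frac1{|I|}\int_I|b_1-\langle b_1\rangle_I|^r\big)^{1/r}\big(\frac1{|I|}\int_I|b_2-\langle b_2\rangle_I|^r\big)^{1/r}$ and $T_r(b_1,b_2)=\sup_I\big(\frac1{|I|}\int_I|b_1-\langle b_1\rangle_I|^r|b_2-\langle b_2\rangle_I|^r\big)^{1/r}$. *)

(* Defs.v *)
From HB Require Import structures.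
From mathcomp Require Import all_boot all_order all_algebra.
From mathcomp Require Import all_classical all_reals all_analysis.
Set Implicit Arguments. Unset Strict Implicit. Unset Printing Implicit Defensive.
Import Order.TTheory GRing.Theory Num.Theory.
Local Open Scope classical_set_scope.
Local Open Scope ring_scope.

(* Intervals I are the bounded closed intervals [a,b] with a < b (the choice of
   open/closed endpoints is irrelevant for Lebesgue integrals). *)

Definition avg {R : realType} (f : R -> R) (a b : R) : R :=
  (b - a)^-1 * Rintegral (@lebesgue_measure R) `[a, b] f.

Definition osc {R : realType} (r : R) (f : R -> R) (a b : R) : \bar R :=
  ((b - a)^-1)%:E *
  (\int[@lebesgue_measure R]_(x in `[a, b]) ((`|f x - avg f a b| `^ r)%:E))%E.

Definition Smean {R : realType} (r : R) (f g : R -> R) : \bar R :=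
  ereal_sup [set y : \bar R | exists a b : R, a < b /\
     y = (poweR (osc r f a b) r^-1 * poweR (osc r g a b) r^-1)%E].

Definition Tmean {R : realType} (r : R) (f g : R -> R) : \bar R :=
  ereal_sup [set y : \bar R | exists a b : R, a < b /\
     y = poweR (((b - a)^-1)%:E *
       (\int[@lebesgue_measure R]_(x in `[a, b])
          ((`|f x - avg f a b| `^ r * `|g x - avg g a b| `^ r)%:E)))%E r^-1].

Definition Lploc {R : realType} (r : R) (f : R -> R) : Prop :=
  measurable_fun setT f /\
  forall a b : R, a < b ->
    (\int[@lebesgue_measure R]_(x in `[a, b]) ((`|f x| `^ r)%:E) < +oo)%E.

(* Main.v *)
Require Import Defs.
From HB Require Import structures.
From mathcomp Require Import all_boot all_order all_algebra.
From mathcomp Require Import all_classical all_reals all_analysis.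
From mathcomp Require Import measurable_realfun.
From mathcomp Require Import lra ring.
Import Order.TTheory GRing.Theory Num.Theory.
Local Open Scope ring_scope.
Local Open Scope classical_set_scope.

Section helpers.
Context {R : realType}.
Local Notation mu := (@lebesgue_measure R).

Lemma mpow (f : R -> R) (c r : R) (D : set R) : measurable_fun setT f ->
  measurable_fun D (fun x => `|f x - c| `^ r).
Proof.
move=> mf.
apply: (@measurableT_comp _ _ _ _ _ _ ((@powR R)^~ r) _ (fun x => `|f x - c|)).
  exact: measurable_realfun.measurable_powR.
apply: (@measurableT_comp _ _ _ _ _ _ (@Num.Def.normr _ R) _ (fun x => f x - c)).
  exact: measurable_realfun.normr_measurable.
apply: measurable_funB; last exact: measurable_cst.
exact: measurable_funS mf.
Qed.

Lemma mitv (a b : R) : measurable (`[a, b] : set R).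
Proof. exact: measurable_itv. Qed.

Lemma mu_itv (a b : R) : a <= b -> mu `[a, b] = (b - a)%:E.
Proof.
move=> ab; rewrite lebesgue_measure_itv /= lte_fin.
case: ltgtP ab => // -> _; by rewrite subrr.
Qed.

Lemma int_le_cst {g : R -> R} {a b M : R} : a <= b ->
  measurable_fun `[a, b] g ->
  (forall x, `[a, b] x -> 0 <= g x <= M) ->
  (0 <= \int[mu]_(x in `[a, b]) (g x)%:E <= (M * (b - a))%:E)%E.
Proof.
move=> ab mg gb; apply/andP; split.
  apply: integral_ge0 => x xab; have /andP[g0 _] := gb x xab; by rewrite lee_fin.
have -> : (M * (b - a))%:E = (\int[mu]_(x in `[a, b]) (cst M%:E x))%E.
  rewrite integral_cst; last exact: mitv.
  by rewrite EFinM -(mu_itv _ _ ab).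
  apply: ge0_le_integral => //.
  - by move=> x xab; have /andP[g0 _] := gb x xab; rewrite lee_fin.
  - exact/measurable_EFinP.
  - by move=> x xab; have /andP[_ gM] := gb x xab; rewrite lee_fin.
Qed.


Lemma avg_le (f : R -> R) (a b B : R) : a < b ->
  (0 <= \int[mu]_(x in `[a, b]) (f x)%:E <= B%:E)%E ->
  0 <= avg f a b <= B / (b - a).
Proof.
move=> ab /andP[h0 h1].
have Ifin : (\int[mu]_(x in `[a, b]) (f x)%:E)%E \is a fin_num.
  by rewrite ge0_fin_numE // (le_lt_trans h1) ?ltry.
move: h1 h0; rewrite -(fineK Ifin) !lee_fin => h1 h0.
have ba : 0 < b - a by rewrite subr_gt0.
rewrite /avg /Rintegral; apply/andP; split.
  by rewrite mulr_ge0 // invr_ge0 ltW.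
by rewrite mulrC ler_pdivrMr // divfK ?gt_eqF.
Qed.

Lemma avg_bound (f : R -> R) (a b M : R) : a < b ->
  measurable_fun setT f ->
  (forall x, `[a, b] x -> 0 <= f x <= M) -> 0 <= avg f a b <= M.
Proof.
move=> ab mf fb.
have ba : 0 < b - a by rewrite subr_gt0.
have := @avg_le f a b (M * (b - a)) ab.
rewrite mulfK ?gt_eqF //; apply; apply: int_le_cst => //.
- exact: ltW.
- exact: measurable_funS mf.
Qed.

Lemma int_le_ind {g : R -> R} {a b K e : R} : a <= b -> 0 <= K -> 0 <= e ->
  measurable_fun `[a, b] g ->
  (forall x, `[a, b] x -> 0 <= g x <= K * (\1_(`[0, 2] : set R) x + e)) ->
  (0 <= \int[mu]_(x in `[a, b]) (g x)%:E <= (K * (2 + e * (b - a)))%:E)%E.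
Proof.
move=> ab K0 e0 mg gb; apply/andP; split.
  apply: integral_ge0 => x xab; have /andP[g0 _] := gb x xab; by rewrite lee_fin.
apply: (@le_trans _ _ (\int[mu]_(x in `[a, b]) ((K * \1_(`[0, 2] : set R) x + K * e)%:E))%E).
  apply: ge0_le_integral => //.
  - by move=> x xab; have /andP[g0 _] := gb x xab; rewrite lee_fin.
  - exact/measurable_EFinP.
  - apply/measurable_EFinP; apply: measurable_funD; last exact: measurable_cst.
    apply: measurable_funM; first exact: measurable_cst.
    by apply: measurable_indic; exact: mitv.
  - by move=> x xab; have /andP[_ gM] := gb x xab; rewrite lee_fin -mulrDr.
under eq_integral do rewrite EFinD.
rewrite ge0_integralD //; first last.
- by move=> x _; rewrite lee_fin mulr_ge0.
- apply/measurable_EFinP; apply: measurable_funM; first exact: measurable_cst.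
  by apply: measurable_indic; exact: mitv.
- by move=> x _; rewrite lee_fin mulr_ge0.
rewrite integral_cst; last exact: mitv.
under eq_integral do rewrite EFinM.
rewrite ge0_integralZl_EFin //; first last.
- by apply/measurable_EFinP; apply: measurable_indic; exact: mitv.
rewrite integral_indic; [|exact: mitv|exact: mitv].
apply: (@le_trans _ _ (K%:E * 2%:E + (K * e)%:E * (b - a)%:E)%E).
  apply: leeD.
    apply: lee_wpmul2l; first by rewrite lee_fin.
    have -> : (2%:E = lebesgue_measure (`[0%R, 2%R] : set R))%E.
      by rewrite mu_itv // subr0.
    by apply: measureIl; exact: mitv.
  by rewrite -(mu_itv _ _ ab).
rewrite -!EFinM -EFinD lee_fin mulrDr; rewrite le_eqVlt; apply/orP; left; apply/eqP; ring.
Qed.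


Lemma powR_le (r x y : R) : 0 <= r -> 0 <= x -> x <= y -> x `^ r <= y `^ r.
Proof.
move=> r0 x0 xy; apply: (ge0_ler_powR r0) => //; rewrite nnegrE //.
exact: le_trans xy.
Qed.

Lemma powRK1 {r x : R} : r != 0 -> 0 <= x -> (x `^ r^-1) `^ r = x.
Proof. by move=> r0 x0; rewrite -powRrM mulVf // powRr1. Qed.

Lemma powRK2 {r x : R} : r != 0 -> 0 <= x -> (x `^ r) `^ r^-1 = x.
Proof. by move=> r0 x0; rewrite -powRrM mulfV // powRr1. Qed.

Lemma scale_le {a b : R} {I : \bar R} {B : R} : a < b ->
  (0 <= I <= B%:E)%E -> (0 <= ((b - a)^-1)%:E * I <= (B / (b - a))%:E)%E.
Proof.
move=> ab /andP[I0 IB].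
have ba : 0 < b - a by rewrite subr_gt0.
apply/andP; split; first by rewrite mule_ge0 // lee_fin invr_ge0 ltW.
rewrite mulrC EFinM; apply: lee_wpmul2l => //.
by rewrite lee_fin invr_ge0 ltW.
Qed.

Lemma scale_ge (a b : R) (I : \bar R) (B : R) : a < b ->
  (B%:E <= I)%E -> ((B / (b - a))%:E <= ((b - a)^-1)%:E * I)%E.
Proof.
move=> ab IB.
have ba : 0 < b - a by rewrite subr_gt0.
rewrite mulrC EFinM; apply: lee_wpmul2l => //.
by rewrite lee_fin invr_ge0 ltW.
Qed.

Lemma powe_le (X : \bar R) (B r : R) : 0 <= r ->
  (0 <= X <= B%:E)%E -> (poweR X r <= (B `^ r)%:E)%E.
Proof.
move=> r0; case: X => [x||] //=.
  by rewrite !lee_fin => /andP[x0 xB]; exact: powR_le.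
by case/andP => _; rewrite leNgt ltry.
Qed.

Lemma prod_le {X Y : \bar R} {x y r : R} : 0 <= r -> 0 <= x -> 0 <= y ->
  (0 <= X <= x%:E)%E -> (0 <= Y <= y%:E)%E ->
  (poweR X r * poweR Y r <= ((x * y) `^ r)%:E)%E.
Proof.
move=> r0 x0 y0 hX hY.
apply: (le_trans (lee_pmul (poweR_ge0 _ _) (poweR_ge0 _ _) (powe_le X x r r0 hX) (powe_le Y y r r0 hY))).
by rewrite -EFinM powRM.
Qed.

Lemma powe_ge (X : \bar R) (A r : R) : 0 < r -> 0 <= A ->
  (A%:E <= X)%E -> ((A `^ r)%:E <= poweR X r)%E.
Proof.
move=> r0 A0; case: X => [x||] //=.
  by rewrite !lee_fin => xA; rewrite powR_le // ltW.
by move=> _; rewrite gt_eqF // leey.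
Qed.

Lemma prod_ge {X Y : \bar R} {x y r : R} : 0 < r -> 0 <= x -> 0 <= y ->
  (x%:E <= X)%E -> (y%:E <= Y)%E ->
  (((x * y) `^ r)%:E <= poweR X r * poweR Y r)%E.
Proof.
move=> r0 x0 y0 hX hY.
rewrite powRM // EFinM; apply: lee_pmul; rewrite ?lee_fin ?powR_ge0 //.
- exact: powe_ge.
- exact: powe_ge.
Qed.

Lemma sup_oo (S : set (\bar R)) : (forall M : R, 0 <= M -> (M%:E <= ereal_sup S)%E) ->
  ereal_sup S = +oo%E.
Proof.
move=> H; case E: (ereal_sup S) => [r||] //.
  have := H (`|r| + 1) (addr_ge0 (normr_ge0 r) ler01).
  rewrite E lee_fin => h.
  have : r < `|r| + 1 by rewrite (le_lt_trans (ler_norm r)) // ltrDl.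
  by rewrite ltNge h.
by have := H 0 (lexx 0); rewrite E.
Qed.

Lemma int_ge_sub (g : R -> R) (a b u v m : R) : a <= u -> u <= v -> v <= b ->
  0 <= m -> measurable_fun `[a, b] g ->
  (forall x, `[a, b] x -> 0 <= g x) ->
  (forall x, `[u, v] x -> m <= g x) ->
  ((m * (v - u))%:E <= \int[mu]_(x in `[a, b]) (g x)%:E)%E.
Proof.
move=> au uv vb m0 mg g0 gm.
have sub : (`[u, v] : set R) `<=` `[a, b].
  move=> x /=; rewrite !in_itv /= => /andP[ux xv].
  by rewrite (le_trans au ux) (le_trans xv vb).
apply: (@le_trans _ _ (\int[mu]_(x in `[u, v]) (g x)%:E)%E); last first.
  apply: ge0_subset_integral => //.
  exact/measurable_EFinP.
have -> : (m * (v - u))%:E = (\int[mu]_(x in `[u, v]) (cst m%:E x))%E.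
  rewrite integral_cst; last exact: mitv.
  by rewrite EFinM -(mu_itv _ _ uv).
apply: ge0_le_integral => //.
apply/measurable_EFinP; exact: measurable_funS mg.
Qed.

End helpers.

Section fns.
Context {R : realType}.
Local Notation mu := (@lebesgue_measure R).

Definition phi (p : R) (x : R) : R := (Num.max (- x) 0) `^ p^-1.
Definition psi (x : R) : R := Num.max 0 (1 - `|x - 1|).

Lemma phi_ge0 p x : 0 <= phi p x.
Proof. exact: powR_ge0. Qed.

Lemma phi_le p a x : 0 < p -> a <= x -> phi p x <= (Num.max (- a) 0) `^ p^-1.
Proof.
move=> p0 ax; apply: powR_le; first by rewrite invr_ge0 ltW.
  by rewrite le_max; apply/orP; right.
rewrite ge_max; apply/andP; split; rewrite le_max; apply/orP; [left|by right].
by rewrite lerN2.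
Qed.

Lemma phi_meas p : measurable_fun setT (phi p).
Proof.
rewrite /phi; apply: (measurableT_comp (measurable_realfun.measurable_powR _)).
apply: measurable_maxr; [exact: measurable_funN|exact: measurable_cst].
Qed.

Lemma psi_ge0 x : 0 <= psi x.
Proof. by rewrite /psi le_max lexx. Qed.

Lemma psi_le1 x : psi x <= 1.
Proof. by rewrite /psi ge_max ler01 gerDl oppr_le0 normr_ge0. Qed.

Lemma psi_out x : x <= 0 \/ 2 <= x -> psi x = 0.
Proof.
move=> h; rewrite /psi; apply/max_idPl.
case: h => h.
  by rewrite ler0_norm; lra.
by rewrite ger0_norm; lra.
Qed.

Lemma psi_half x : 2^-1 <= x <= 1 -> 2^-1 <= psi x.
Proof.
case/andP => hx h1; rewrite /psi le_max; apply/orP; right.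
by rewrite ler0_norm; lra.
Qed.

Lemma psi_meas : measurable_fun setT psi.
Proof.
rewrite /psi; apply: measurable_maxr; first exact: measurable_cst.
apply: measurable_funB; first exact: measurable_cst.
apply: (measurableT_comp (@measurable_realfun.normr_measurable R setT)).
apply: measurable_funB; [exact: measurable_id|exact: measurable_cst].
Qed.

End fns.

Section bounds.
Context {R : realType}.
Local Notation mu := (@lebesgue_measure R).

Lemma inab {a b x : R} : `[a, b] x -> a <= x <= b.
Proof. by rewrite /= in_itv. Qed.

Lemma absdiff_le (u v K : R) : 0 <= u <= K -> 0 <= v <= K -> `|u - v| <= K.
Proof. move=> /andP[? ?] /andP[? ?]; rewrite ler_norml; apply/andP; split; lra. Qed.

Lemma osc_le (r : R) (f : R -> R) (a b K : R) : 0 < r -> a < b -> 0 <= K ->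
  measurable_fun setT f ->
  (forall x, `[a, b] x -> `|f x - avg f a b| <= K) ->
  (0 <= osc r f a b <= (K `^ r)%:E)%E.
Proof.
move=> r0 ab K0 mf fK.
have ba : 0 < b - a by rewrite subr_gt0.
have := @scale_le R a b _ (K `^ r * (b - a)) ab.
rewrite mulfK ?gt_eqF //; apply; apply: int_le_cst.
- exact: ltW.
- exact: mpow.
- move=> x xab; rewrite powR_ge0 /=; apply: powR_le => //; first exact: ltW.
  exact: fK.
Qed.

Lemma osc_le_ind (r : R) (f : R -> R) (a b K e : R) : 0 < r -> a < b -> 0 <= K ->
  0 <= e -> measurable_fun setT f ->
  (forall x, `[a, b] x -> `|f x - avg f a b| `^ r <= K * (\1_(`[0, 2] : set R) x + e)) ->
  (0 <= osc r f a b <= (K * (2 + e * (b - a)) / (b - a))%:E)%E.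
Proof.
move=> r0 ab K0 e0 mf fK.
apply: scale_le => //; apply: int_le_ind => //.
- exact: ltW.
- exact: mpow.
- by move=> x xab; rewrite powR_ge0 /= fK.
Qed.

End bounds.

Section main_upper.
Context {R : realType} (p : R) (hp : 1 < p).
Local Notation mu := (@lebesgue_measure R).

Let p0 : 0 < p. Proof. exact: lt_trans ltr01 hp. Qed.
Let pn0 : p != 0. Proof. exact: lt0r_neq0. Qed.
Let ip0 : 0 <= p^-1. Proof. by rewrite invr_ge0 ltW. Qed.

Lemma phi_dev a b x : a < b -> `[a, b] x ->
  `|phi p x - avg (phi p) a b| <= (Num.max (- a) 0) `^ p^-1.
Proof.
move=> ab xab; apply: absdiff_le.
  by rewrite phi_ge0 phi_le //; case/andP: (inab xab).
apply: avg_bound => //; first exact: phi_meas.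
by move=> y yab; rewrite phi_ge0 phi_le //; case/andP: (inab yab).
Qed.

Lemma phi_devp a b x : a < b -> `[a, b] x ->
  `|phi p x - avg (phi p) a b| `^ p <= Num.max (- a) 0.
Proof.
move=> ab xab; rewrite -[leRHS](powRK1 pn0); last by rewrite le_max; apply/orP; right.
by apply: powR_le => //; [exact: ltW|exact: phi_dev].
Qed.

Lemma osc_phi a b : a < b -> (0 <= osc p (phi p) a b <= (Num.max (- a) 0)%:E)%E.
Proof.
move=> ab; rewrite -[X in (_ <= X%:E)%E](powRK1 pn0); last by rewrite le_max; apply/orP; right.
apply: osc_le => //; first exact: powR_ge0.
  exact: phi_meas.
by move=> x xab; exact: phi_dev.
Qed.

Lemma notin02 (x : R) : x \notin (`[0, 2] : set R) -> x <= 0 \/ 2 <= x.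
Proof.
move/negP; rewrite in_setE /= in_itv /= => hx.
case: (leP x 0) => h; first by left.
right; case: (leP 2 x) => // h2; exfalso; apply: hx; by rewrite !ltW.
Qed.

Lemma psi_avg (a b : R) : a < b -> 0 <= avg psi a b <= 1 /\ avg psi a b <= 2 / (b - a).
Proof.
move=> ab; split.
  by apply: avg_bound => //; [exact: psi_meas|move=> x _; rewrite psi_ge0 psi_le1].
suff hI : (0 <= \int[mu]_(x in `[a, b]) (psi x)%:E <= 2%:E)%E.
  by have /andP[] := @avg_le R psi a b 2 ab hI.
have := @int_le_ind R psi a b 1 0 (ltW ab) ler01 (lexx 0).
rewrite mul0r addr0 mul1r; apply.
  exact: measurable_funS psi_meas.
move=> x xab; rewrite psi_ge0 /= addr0 mul1r indicE.
case: (boolP (x \in (`[0, 2] : set R))) => hx; first exact: psi_le1.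
rewrite psi_out //; exact: notin02.
Qed.

Lemma psi_dev (a b x : R) : a < b ->
  `|psi x - avg psi a b| `^ p <= 1 * (\1_(`[0, 2] : set R) x + avg psi a b).
Proof.
move=> ab; have [/andP[d0 d1] _] := psi_avg a b ab.
rewrite mul1r indicE.
case: (boolP (x \in (`[0, 2] : set R))) => hx.
  apply: (@le_trans _ _ 1); last by rewrite /= ?mulr1n; lra.
  rewrite -[leRHS](_ : 1 `^ p = 1); last by rewrite powR1.
  apply: powR_le => //; first exact: ltW.
  by apply: absdiff_le; rewrite ?psi_ge0 ?psi_le1 ?d0 ?d1.
rewrite psi_out; last exact: notin02.
rewrite /= add0r add0r normrN ger0_norm //.
have [->|dn0] := eqVneq (avg psi a b) 0; first by rewrite powR0.
by apply: ge1r_powR; [rewrite lt0r dn0 d0|exact: ltW].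
Qed.


Lemma psi_zero {a b x : R} : b <= 0 -> `[a, b] x -> psi x = 0.
Proof. move=> hb xab; have /andP[_ xb] := inab xab; apply: psi_out; left; exact: le_trans hb. Qed.

Lemma avg_psi0 (a b : R) : a < b -> b <= 0 -> avg psi a b = 0.
Proof.
move=> ab hb; apply/eqP; rewrite eq_le.
have h : forall x, `[a, b] x -> 0 <= psi x <= 0.
  by move=> x xab; rewrite (psi_zero hb xab) lexx.
by have /andP[-> ->] := @avg_bound R psi a b 0 ab psi_meas h.
Qed.

Lemma osc_psi0 (a b : R) : a < b -> b <= 0 -> (0 <= osc p psi a b <= 0%:E)%E.
Proof.
move=> ab hb; rewrite -[X in (_ <= X%:E)%E](powR0 pn0).
apply: osc_le => //; first exact: psi_meas.
by move=> x xab; rewrite (psi_zero hb xab) (avg_psi0 a b ab hb) subrr normr0.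
Qed.

Lemma osc_psi_le (a b : R) : a < b -> (0 <= osc p psi a b <= (4 / (b - a))%:E)%E.
Proof.
move=> ab; have ba : 0 < b - a by rewrite subr_gt0.
have [/andP[d0 d1] d2] := psi_avg a b ab.
have /andP[-> h] := @osc_le_ind R p psi a b 1 (avg psi a b) p0 ab ler01 d0 psi_meas
  (fun x _ => psi_dev a b x ab).
apply: (le_trans h); rewrite lee_fin mul1r ler_pM2r ?invr_gt0 //.
have : avg psi a b * (b - a) <= 2 by rewrite -ler_pdivlMr.
lra.
Qed.

Lemma Sterm_le (a b : R) : a < b ->
  (poweR (osc p (phi p) a b) p^-1 * poweR (osc p psi a b) p^-1 <= (4 `^ p^-1)%:E)%E.
Proof.
move=> ab; have ba : 0 < b - a by rewrite subr_gt0.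
have hX := osc_phi a b ab.
have A0 : 0 <= Num.max (- a) 0 by rewrite le_max; apply/orP; right.
case: (leP b 0) => hb.
  have hY := osc_psi0 a b ab hb.
  apply: (le_trans (prod_le ip0 A0 (lexx 0) hX hY)).
  by rewrite mulr0 powR0 ?invr_eq0 // lee_fin powR_ge0.
have hY := osc_psi_le a b ab.
have h4 : 0 <= 4 / (b - a) by rewrite divr_ge0 // ltW.
apply: (le_trans (prod_le ip0 A0 h4 hX hY)).
rewrite lee_fin; apply: powR_le => //; first by rewrite mulr_ge0.
rewrite mulrA ler_pdivrMr // [4 * _]mulrC ler_pM2r //.
rewrite ge_max; apply/andP; split; lra.
Qed.

Lemma Tterm_le (a b : R) : a < b ->
  (poweR (((b - a)^-1)%:E * \int[mu]_(x in `[a, b])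
     ((`|phi p x - avg (phi p) a b| `^ p * `|psi x - avg psi a b| `^ p)%:E)) p^-1
   <= (4 `^ p^-1)%:E)%E.
Proof.
move=> ab; have ba : 0 < b - a by rewrite subr_gt0.
have A0 : 0 <= Num.max (- a) 0 by rewrite le_max; apply/orP; right.
set g := (fun x => `|phi p x - avg (phi p) a b| `^ p * `|psi x - avg psi a b| `^ p).
have mg : measurable_fun `[a, b] g.
  by apply: measurable_funM; apply: mpow; [exact: phi_meas|exact: psi_meas].
apply: powe_le => //.
case: (leP b 0) => hb.
  have hg : forall x, `[a, b] x -> 0 <= g x <= 0.
    move=> x xab; rewrite /g (psi_zero hb xab) (avg_psi0 a b ab hb) subrr normr0 powR0 //.
    by rewrite mulr0 lexx.
  have h := int_le_cst (ltW ab) mg hg.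
  have /andP[-> h2] := scale_le ab h.
  by apply: (le_trans h2); rewrite lee_fin mul0r mul0r.
have [/andP[d0 d1] d2] := psi_avg a b ab.
have hg : forall x, `[a, b] x -> 0 <= g x <= Num.max (- a) 0 * (\1_(`[0, 2] : set R) x + avg psi a b).
  move=> x xab; rewrite /g mulr_ge0 ?powR_ge0 //=.
  rewrite -[X in _ <= _ * X]mul1r.
  by apply: ler_pM; rewrite ?powR_ge0 //; [exact: phi_devp|exact: psi_dev].
have h := int_le_ind (ltW ab) A0 d0 mg hg.
have /andP[-> h2] := scale_le ab h.
apply: (le_trans h2); rewrite lee_fin.
have hd : avg psi a b * (b - a) <= 2 by rewrite -ler_pdivlMr.
have hA : Num.max (- a) 0 <= b - a by rewrite ge_max; apply/andP; split; lra.
rewrite ler_pdivrMr //.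
apply: (@le_trans _ _ (Num.max (- a) 0 * 4)).
  by apply: ler_wpM2l => //; lra.
by rewrite [4 * _]mulrC ler_pM2r.
Qed.

End main_upper.

Section lploc.
Context {R : realType} (p : R) (hp : 1 < p).
Local Notation mu := (@lebesgue_measure R).

Let p0 : 0 < p. Proof. exact: lt_trans ltr01 hp. Qed.
Let pn0 : p != 0. Proof. exact: lt0r_neq0. Qed.

Lemma mpow0 (f : R -> R) (r : R) (D : set R) : measurable_fun setT f ->
  measurable_fun D (fun x => `|f x| `^ r).
Proof.
move=> mf.
apply: (measurableT_comp (measurable_realfun.measurable_powR _)).
apply: (measurableT_comp (@measurable_realfun.normr_measurable R setT)).
exact: measurable_funS mf.
Qed.

Lemma Lploc_phi : Lploc p (phi p).
Proof.
split; first exact: phi_meas.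
move=> a b ab.
have A0 : 0 <= Num.max (- a) 0 by rewrite le_max; apply/orP; right.
have hg : forall x, `[a, b] x -> 0 <= `|phi p x| `^ p <= Num.max (- a) 0.
  move=> x xab; rewrite powR_ge0 /= ger0_norm ?phi_ge0 //.
  rewrite -[leRHS](powRK1 pn0 A0); apply: powR_le; [exact: ltW|exact: phi_ge0|].
  by apply: phi_le => //; have /andP[] := inab xab.
have := int_le_cst (ltW ab) (mpow0 (phi p) p `[a, b] (phi_meas p)) hg.
by case/andP => _ h; apply: (le_lt_trans h); rewrite ltry.
Qed.

Lemma Lploc_psi : Lploc p psi.
Proof.
split; first exact: psi_meas.
move=> a b ab.
have hg : forall x, `[a, b] x -> 0 <= `|psi x| `^ p <= 1.
  move=> x xab; rewrite powR_ge0 /= ger0_norm ?psi_ge0 //.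
  rewrite -[leRHS](_ : 1 `^ p = 1); last by rewrite powR1.
  by apply: powR_le; [exact: ltW|exact: psi_ge0|exact: psi_le1].
have := int_le_cst (ltW ab) (mpow0 psi p `[a, b] psi_meas) hg.
by case/andP => _ h; apply: (le_lt_trans h); rewrite ltry.
Qed.

Lemma Smean_fin : (Smean p (phi p) psi < +oo)%E.
Proof.
apply: (@le_lt_trans _ _ (4 `^ p^-1)%:E); last exact: ltry.
apply: ge_ereal_sup => y [a [b [ab ->]]].
exact: Sterm_le.
Qed.

Lemma Tmean_fin : (Tmean p (phi p) psi < +oo)%E.
Proof.
apply: (@le_lt_trans _ _ (4 `^ p^-1)%:E); last exact: ltry.
apply: ge_ereal_sup => y [a [b [ab ->]]].
exact: Tterm_le.
Qed.

End lploc.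

Section lower.
Context {R : realType} (p q : R) (hp : 1 < p) (hpq : p < q).
Local Notation mu := (@lebesgue_measure R).

Let p0 : 0 < p. Proof. exact: lt_trans ltr01 hp. Qed.
Let pn0 : p != 0. Proof. exact: lt0r_neq0. Qed.
Let q0 : 0 < q. Proof. exact: lt_trans p0 hpq. Qed.
Let qn0 : q != 0. Proof. exact: lt0r_neq0. Qed.

Lemma osc_psi_ge (t : R) : 4 <= t ->
  ((((4^-1) `^ q * (1 - 2^-1)) / (1 - - (2 * t)))%:E <= osc q psi (- (2 * t)) 1)%E.
Proof.
move=> t4.
have ab : - (2 * t) < 1 by lra.
have [/andP[d0 d1] d2] := psi_avg (- (2 * t)) 1 ab.
have dq : avg psi (- (2 * t)) 1 <= 4^-1.
  apply: (le_trans d2); rewrite ler_pdivrMr; lra.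
apply: scale_ge => //.
apply: int_ge_sub.
- lra.
- lra.
- lra.
- exact: powR_ge0.
- exact: mpow psi_meas.
- by move=> x _; exact: powR_ge0.
- move=> x xuv; have hx := inab xuv; have hpx := psi_half x hx.
  apply: powR_le; [exact: ltW|lra|].
  apply: (le_trans _ (ler_norm _)); lra.
Qed.

Lemma phi_neg (x : R) : x <= 0 -> phi p x = (- x) `^ p^-1.
Proof. by move=> x0; rewrite /phi max_l // oppr_ge0. Qed.

Lemma osc_phi_ge (t : R) : 4 <= t ->
  (((((t `^ p^-1) / 4) `^ q * (t * 2^-1 `^ p)) / (1 - - (2 * t)))%:E
     <= osc q (phi p) (- (2 * t)) 1)%E.
Proof.
move=> t4.
have ab : - (2 * t) < 1 by lra.
have t0 : 0 < t by lra.
set h := t `^ p^-1.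
have h0 : 0 < h by rewrite /h powR_gt0.
have hp2 : 2^-1 `^ p <= 2^-1.
  by apply: ge1r_powR; [apply/andP; split; lra | exact: ltW].
have hp0 : 0 <= 2^-1 `^ p := powR_ge0 _ _.
set w := t * 2^-1 `^ p.
have w0 : 0 <= w by rewrite /w mulr_ge0 // ltW.
have wt : w <= t / 2.
  by rewrite /w; apply: ler_wpM2l; [exact: ltW | lra].
have hw : w `^ p^-1 = h / 2.
  by rewrite /w powRM // ?(ltW t0) // powRK2 // ?invr_ge0 ?ler0n.
set m := (h / 4) `^ q.
have m0 : 0 <= m := powR_ge0 _ _.
apply: scale_ge => //.
set c := avg (phi p) (- (2 * t)) 1.
have mg := mpow (phi p) c q `[- (2 * t), 1] (phi_meas p).
have g0 : forall x, `[- (2 * t), 1] x -> 0 <= `|phi p x - c| `^ q.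
  by move=> x _; exact: powR_ge0.
have key : forall x, h / 4 <= `|phi p x - c| -> m <= `|phi p x - c| `^ q.
  move=> x hx; apply: powR_le; [exact: ltW | | exact: hx].
  by rewrite divr_ge0 // ltW.
case: (leP c (3 * h / 4)) => hc.
  apply: (@le_trans _ _ ((m * (- t - - (2 * t)))%:E)).
    by rewrite lee_fin; apply: ler_wpM2l => //; lra.
  apply: int_ge_sub => //; try lra.
  move=> x xuv; have /andP[x1 x2] := inab xuv.
  apply: key; rewrite phi_neg; last by lra.
  have : h <= (- x) `^ p^-1.
    by apply: powR_le; [rewrite invr_ge0 ltW | exact: ltW | lra].
  move=> hh; apply: (le_trans _ (ler_norm _)); lra.
have -> : m * w = m * (0 - - w) by rewrite sub0r opprK.
apply: int_ge_sub => //; try lra.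
move=> x xuv; have /andP[x1 x2] := inab xuv.
apply: key; rewrite phi_neg //.
have : (- x) `^ p^-1 <= h / 2.
  by rewrite -hw; apply: powR_le; [rewrite invr_ge0 ltW | lra | lra].
move=> hh; rewrite ler_normr; apply/orP; right; lra.
Qed.

Lemma arith (M : R) : 0 <= M -> exists t : R, 4 <= t /\
  M <= (((((t `^ p^-1) / 4) `^ q * (t * 2^-1 `^ p)) / (1 - - (2 * t))) *
        (((4^-1) `^ q * (1 - 2^-1)) / (1 - - (2 * t)))) `^ q^-1.
Proof.
move=> M0.
set e := p^-1 * q - 1.
have e0 : 0 < e.
  rewrite /e subr_gt0 mulrC -(mulfV pn0) ltr_pM2r ?invr_gt0 //.
set A := (4^-1 : R) `^ q.
have A0 : 0 < A by rewrite /A powR_gt0.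
set s := (2^-1 : R) `^ p.
have s0 : 0 < s by rewrite /s powR_gt0.
set K := A * A * s * 2^-1.
have K0 : 0 < K by rewrite /K !mulr_gt0.
set N := 9 * M `^ q / K.
have N0 : 0 <= N by rewrite /N divr_ge0 ?mulr_ge0 ?powR_ge0 // ltW.
exists (Num.max 4 (N `^ e^-1)); split; first by rewrite le_max lexx.
set t := Num.max 4 (N `^ e^-1).
have t4 : 4 <= t by rewrite le_max lexx.
have t0 : 0 < t by lra.
have tN : N <= t `^ e.
  rewrite -[leLHS](powRK1 (lt0r_neq0 e0) N0); apply: powR_le; [exact: ltW|exact: powR_ge0|].
  by rewrite le_max lexx orbT.
set T := t `^ e.
have E1 : ((t `^ p^-1) / 4) `^ q = T * t * A.
  rewrite powRM ?powR_ge0 ?invr_ge0 ?ler0n // -powRrM.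
  rewrite (_ : p^-1 * q = e + 1); last by rewrite /e subrK.
  by rewrite powRD ?powRr1 ?(ltW t0) // implybE (lt0r_neq0 t0) orbT.
rewrite E1.
rewrite -[leLHS](powRK2 qn0 M0); apply: powR_le; [by rewrite invr_ge0 ltW|exact: powR_ge0|].
have D0 : 0 < 1 - - (2 * t) by lra.
have -> : T * t * A * (t * s) / (1 - - (2 * t)) * (A * (1 - 2^-1) / (1 - - (2 * t)))
   = K * T * (t * t / ((1 - - (2 * t)) * (1 - - (2 * t)))).
  by rewrite /K; field; rewrite gt_eqF.
have hMq : M `^ q <= K / 9 * T.
  rewrite /N in tN; move: tN; rewrite ler_pdivrMr // => tN.
  rewrite mulrC mulrA ler_pdivlMr // /T; lra.
apply: (le_trans hMq).
have T0 : 0 <= T by exact: powR_ge0.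
rewrite [leLHS](_ : _ = K * T * 9^-1); last by rewrite mulrAC.
apply: ler_wpM2l; first by rewrite mulr_ge0 // ltW.
rewrite ler_pdivlMr ?mulr_gt0 //; nra.
Qed.

Lemma Smean_inf : Smean q (phi p) psi = +oo%E.
Proof.
apply: sup_oo => M M0.
have [t [t4 hM]] := arith M M0.
have hX := osc_phi_ge t t4.
have hY := osc_psi_ge t t4.
have t0 : 0 < t by lra.
have D0 : 0 < 1 - - (2 * t) by lra.
have x0 : 0 <= ((t `^ p^-1) / 4) `^ q * (t * 2^-1 `^ p) / (1 - - (2 * t)).
  by rewrite !mulr_ge0 ?powR_ge0 ?invr_ge0 ?ltW.
have y0 : 0 <= (4^-1) `^ q * (1 - 2^-1) / (1 - - (2 * t)).
  rewrite !mulr_ge0 ?powR_ge0 ?invr_ge0 ?ltW //; lra.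
apply: (@le_trans _ _ (poweR (osc q (phi p) (- (2 * t)) 1) q^-1 *
                       poweR (osc q psi (- (2 * t)) 1) q^-1)%E).
  apply: (le_trans _ (prod_ge _ x0 y0 hX hY)); first by rewrite lee_fin.
  by rewrite invr_gt0.
apply: ereal_sup_ubound; exists (- (2 * t)), 1; split => //; lra.
Qed.

End lower.

Close Scope classical_set_scope.

Theorem proposition4p1 (R : realType) (p q : R) :
  1 < p -> p < q ->
  exists phi psi : R -> R,
    [/\ Lploc p phi, Lploc p psi,
        (Smean p phi psi < +oo)%E,
        (Tmean p phi psi < +oo)%E &
        Smean q phi psi = +oo%E].
Proof.
move=> hp hpq; exists (phi p), psi; split.
- exact: Lploc_phi.
- exact: (Lploc_psi p hp).
- exact: Smean_fin.
- exact: Tmean_fin.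
- exact: Smean_inf.
Qed.
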